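(* Let $X$ and $Y$ be Banach spaces and let $T\in B(X)$ and $S\in B(Y)$ be compact operators that are equivalent after extension. Then there exist operators $G\in B(Y,X)$, $H\in B(X,Y)$ and a finite rank operator $R\in B(X)$ such that $T=GSH+R$.
   Context: All Banach spaces are complex; $B(X,Y)$ denotes the bounded linear operators from $X$ to $Y$, $B(X)=B(X,X)$; invertibility of an operator means it has a bounded inverse. $X\oplus Y$ denotes the $\ell^2$-direct sum and $\mathrm{id}_X$ the identity on $X$. Operators $T\in B(X)$ and $S\in B(Y)$ are called equivalent after extension if there exist Banach spaces $X'$, $Y'$ and invertible operators $E\in B(Y\oplus Y',X\oplus X')$ and $F\in B(X\oplus X',Y\oplus Y')$ with $\begin{bmatrix}T&0\\0&\mathrm{id}_{X'}\end{bmatrix}=E\begin{bmatrix}S&0\\0&\mathrm{id}_{Y'}\end{bmatrix}F$. *)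

(* Defs.v *)
From Stdlib Require Import Reals List.
Open Scope R_scope.
Set Implicit Arguments.

Definition C : Type := (R * R)%type.
Definition Cplus (a b : C) : C := (fst a + fst b, snd a + snd b).
Definition Cmult (a b : C) : C :=
  (fst a * fst b - snd a * snd b, fst a * snd b + snd a * fst b).
Definition C1 : C := (1, 0).
Definition Cmod (a : C) : R := sqrt (fst a ^ 2 + snd a ^ 2).

Record VNS := {
  vcar :> Type;
  vadd : vcar -> vcar -> vcar;
  vscal : C -> vcar -> vcar;
  vnorm : vcar -> R }.

Record Banach := {
  bvns :> VNS;
  bzero : bvns;
  bopp : bvns -> bvns;
  b_add_assoc : forall x y z : bvns, vadd _ x (vadd _ y z) = vadd _ (vadd _ x y) z;
  b_add_comm : forall x y : bvns, vadd _ x y = vadd _ y x;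
  b_add_zero : forall x : bvns, vadd _ x bzero = x;
  b_add_opp : forall x : bvns, vadd _ x (bopp x) = bzero;
  b_scal_one : forall x : bvns, vscal _ C1 x = x;
  b_scal_assoc : forall (a b : C) (x : bvns), vscal _ a (vscal _ b x) = vscal _ (Cmult a b) x;
  b_scal_distr_l : forall (a : C) (x y : bvns), vscal _ a (vadd _ x y) = vadd _ (vscal _ a x) (vscal _ a y);
  b_scal_distr_r : forall (a b : C) (x : bvns), vscal _ (Cplus a b) x = vadd _ (vscal _ a x) (vscal _ b x);
  b_norm_nonneg : forall x : bvns, 0 <= vnorm _ x;
  b_norm_sep : forall x : bvns, vnorm _ x = 0 -> x = bzero;
  b_norm_scal : forall (a : C) (x : bvns), vnorm _ (vscal _ a x) = Cmod a * vnorm _ x;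
  b_norm_triangle : forall x y : bvns, vnorm _ (vadd _ x y) <= vnorm _ x + vnorm _ y;
  b_complete : forall u : nat -> bvns,
    (forall eps, eps > 0 -> exists N, forall n m, (n >= N)%nat -> (m >= N)%nat ->
        vnorm _ (vadd _ (u n) (bopp (u m))) < eps) ->
    exists l : bvns, forall eps, eps > 0 -> exists N, forall n, (n >= N)%nat ->
        vnorm _ (vadd _ (u n) (bopp l)) < eps }.

Definition dist {X : Banach} (x y : X) : R := vnorm _ (vadd _ x (bopp X y)).

Definition l2sum (A B : VNS) : VNS := {|
  vcar := (vcar A * vcar B)%type;
  vadd := fun p q => (vadd _ (fst p) (fst q), vadd _ (snd p) (snd q));
  vscal := fun c p => (vscal _ c (fst p), vscal _ c (snd p));
  vnorm := fun p => sqrt (vnorm _ (fst p) ^ 2 + vnorm _ (snd p) ^ 2) |}.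

Definition bounded_linear {A B : VNS} (f : A -> B) : Prop :=
  (forall x y : A, f (vadd _ x y) = vadd _ (f x) (f y)) /\
  (forall (c : C) (x : A), f (vscal _ c x) = vscal _ c (f x)) /\
  exists M : R, forall x : A, vnorm _ (f x) <= M * vnorm _ x.

Definition invertible {A B : VNS} (f : A -> B) : Prop :=
  bounded_linear f /\
  exists g : B -> A, bounded_linear g /\
    (forall x : A, g (f x) = x) /\ (forall y : B, f (g y) = y).

(* Compact: the image of the closed unit ball is relatively compact,
   expressed sequentially (metric space). *)
Definition compact_op {X Y : Banach} (T : X -> Y) : Prop :=
  forall u : nat -> X, (forall n, vnorm _ (u n) <= 1) ->
    exists (phi : nat -> nat) (l : Y),
      (forall n, (phi n < phi (S n))%nat) /\
      (forall eps, eps > 0 -> exists N, forall n, (n >= N)%nat ->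
          dist (T (u (phi n))) l < eps).

Fixpoint lincomb (X : Banach) (cs : list C) (vs : list (vcar X)) : vcar X :=
  match cs, vs with
  | c :: cs', v :: vs' => vadd _ (vscal _ c v) (lincomb X cs' vs')
  | _, _ => bzero X
  end.

Definition finite_rank {X Y : Banach} (R0 : X -> Y) : Prop :=
  exists vs : list (vcar Y), forall x : X,
    exists cs : list C, R0 x = lincomb Y cs vs.

(* Equivalence after extension:
   [T 0; 0 id_X'] = E [S 0; 0 id_Y'] F. *)
Definition EAE {X Y : Banach} (T : X -> X) (S : Y -> Y) : Prop :=
  exists (X' Y' : Banach)
         (E : l2sum Y Y' -> l2sum X X') (F : l2sum X X' -> l2sum Y Y'),
    invertible E /\ invertible F /\
    forall (x : X) (x' : X'),
      ((T x, x') : l2sum X X') =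
      E ((S (fst (F (x, x'))), snd (F (x, x'))) : l2sum Y Y').

(* Main.v *)
Require Import Defs.
From Stdlib Require Import Reals List Lra Lia Classical ClassicalEpsilon FunctionalExtensionality.
Open Scope R_scope.

Notation "x +v y" := (vadd _ x y) (at level 50, left associativity).
Notation "-v x" := (bopp _ x) (at level 35, right associativity).
Notation "x -v y" := (vadd _ x (bopp _ y)) (at level 50, left associativity).
Notation nrm x := (vnorm _ x).
Definition rs {X : Banach} (r : R) (x : X) : X := vscal _ (r, 0) x.

Section Alg.
Context {X : Banach}.
Implicit Types x y z : X.

Lemma addA x y z : x +v (y +v z) = x +v y +v z.
Proof. apply b_add_assoc. Qed.
Lemma addC x y : x +v y = y +v x.
Proof. apply b_add_comm. Qed.
Lemma addr0 x : x +v bzero X = x.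
Proof. apply b_add_zero. Qed.
Lemma add0r x : bzero X +v x = x.
Proof. rewrite addC; apply addr0. Qed.
Lemma addNr' x : x -v x = bzero X.
Proof. apply b_add_opp. Qed.
Lemma addNl x : (-v x) +v x = bzero X.
Proof. rewrite addC; apply addNr'. Qed.
Lemma addKl x y : -v x +v (x +v y) = y.
Proof. rewrite addA, addNl, add0r; reflexivity. Qed.
Lemma addKr x y : x +v (-v x +v y) = y.
Proof. rewrite addA, addNr', add0r; reflexivity. Qed.
Lemma add_cancel x y z : x +v y = x +v z -> y = z.
Proof. intro H. rewrite <- (addKl x y), H, addKl; reflexivity. Qed.
Lemma opp_uniq x y : x +v y = bzero X -> y = -v x.
Proof. intro H. apply (add_cancel x). rewrite H, addNr'; reflexivity. Qed.
Lemma oppK x : -v (-v x) = x.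
Proof. symmetry. apply opp_uniq. apply addNl. Qed.
Lemma opp0 : -v (bzero X) = bzero X.
Proof. symmetry; apply opp_uniq; apply addr0. Qed.
Lemma oppD x y : -v (x +v y) = -v x +v -v y.
Proof. symmetry; apply opp_uniq.
 rewrite (addC (-v x)), addA, <- (addA x), addNr', addr0, addNr'; reflexivity. Qed.
Lemma subr0 x : x -v bzero X = x.
Proof. rewrite opp0; apply addr0. Qed.
Lemma sub_eq0 x y : x -v y = bzero X -> x = y.
Proof. intro H. apply opp_uniq in H. rewrite <- (oppK x), <- H, oppK; reflexivity. Qed.
Lemma ACl x y z : x +v y +v z = x +v (y +v z).
Proof. symmetry; apply addA. Qed.
Lemma addCA x y z : x +v (y +v z) = y +v (x +v z).
Proof. rewrite !addA, (addC x); reflexivity. Qed.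

Lemma scal_c0 x : vscal _ (0,0) x = bzero X.
Proof. apply (add_cancel (vscal _ (0,0) x)).
 rewrite addr0, <- b_scal_distr_r. unfold Cplus; simpl. rewrite Rplus_0_l; reflexivity. Qed.
Lemma scal_0 c : vscal _ c (bzero X) = bzero X.
Proof. apply (add_cancel (vscal _ c (bzero X))).
 rewrite addr0, <- b_scal_distr_l, addr0; reflexivity. Qed.
Lemma scal_N1 x : vscal _ (-1,0) x = -v x.
Proof. apply opp_uniq. rewrite <- (b_scal_one _ x) at 1. unfold C1.
 rewrite <- b_scal_distr_r. unfold Cplus; simpl.
 replace (1 + -1) with 0 by ring. rewrite Rplus_0_l. apply scal_c0. Qed.
Lemma scal_add c x y : vscal _ c (x +v y) = vscal _ c x +v vscal _ c y.
Proof. apply b_scal_distr_l. Qed.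
Lemma scal_comm (a b : Defs.C) x : vscal _ a (vscal _ b x) = vscal _ b (vscal _ a x).
Proof. rewrite !b_scal_assoc. f_equal. unfold Cmult. f_equal; ring. Qed.
Lemma scal_opp c x : vscal _ c (-v x) = -v vscal _ c x.
Proof. rewrite <- !scal_N1, scal_comm; reflexivity. Qed.
Lemma scal_sub c x y : vscal _ c (x -v y) = vscal _ c x -v vscal _ c y.
Proof. rewrite scal_add, scal_opp; reflexivity. Qed.

Lemma Cmod_real r : Cmod (r, 0) = Rabs r.
Proof. unfold Cmod; simpl fst; simpl snd. replace (r ^ 2 + 0 ^ 2) with (Rsqr r) by (unfold Rsqr; ring).
 apply sqrt_Rsqr_abs. Qed.
Lemma norm0 : nrm (bzero X) = 0.
Proof. rewrite <- (scal_c0 (bzero X)), b_norm_scal, Cmod_real, Rabs_R0; ring. Qed.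
Lemma normN x : nrm (-v x) = nrm x.
Proof. rewrite <- scal_N1, b_norm_scal, Cmod_real. replace (-1) with (-(1)) by ring. rewrite Rabs_Ropp, Rabs_R1; ring. Qed.
Lemma norm_ge0 x : 0 <= nrm x.
Proof. apply b_norm_nonneg. Qed.
Lemma normT x y : nrm (x +v y) <= nrm x + nrm y.
Proof. apply b_norm_triangle. Qed.
Lemma norm_subC x y : nrm (x -v y) = nrm (y -v x).
Proof. rewrite <- normN, oppD, oppK, addC; reflexivity. Qed.
Lemma norm_sub_tri x y z : nrm (x -v z) <= nrm (x -v y) + nrm (y -v z).
Proof. replace (x -v z) with ((x -v y) +v (y -v z)). apply normT.
 rewrite ACl, (addKl y). reflexivity. Qed.
Lemma norm_rev x y : nrm x - nrm y <= nrm (x -v y).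
Proof. pose proof (normT (x -v y) y). rewrite ACl, addNl, addr0 in H. lra. Qed.
Lemma norm_rs r x : nrm (rs r x) = Rabs r * nrm x.
Proof. unfold rs; rewrite b_norm_scal, Cmod_real; reflexivity. Qed.
Lemma rs1 x : rs 1 x = x.
Proof. apply b_scal_one. Qed.
Lemma rs_rs r s x : rs r (rs s x) = rs (r * s) x.
Proof. unfold rs. rewrite b_scal_assoc. f_equal. unfold Cmult; simpl. f_equal; ring. Qed.
Lemma rs_add r x y : rs r (x +v y) = rs r x +v rs r y.
Proof. apply b_scal_distr_l. Qed.
Lemma rs_opp r x : rs r (-v x) = -v rs r x.
Proof. apply scal_opp. Qed.
Lemma rs_addl r s x : rs (r + s) x = rs r x +v rs s x.
Proof. unfold rs. rewrite <- b_scal_distr_r. unfold Cplus; simpl. rewrite Rplus_0_l. reflexivity. Qed.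
Lemma rs_scal r c x : rs r (vscal _ c x) = vscal _ c (rs r x).
Proof. apply scal_comm. Qed.
Lemma rs_inv r x : r <> 0 -> rs r (rs (/ r) x) = x.
Proof. intro. rewrite rs_rs, Rinv_r by auto. apply rs1. Qed.
End Alg.

Definition conv {X : Banach} (u : nat -> X) (l : X) : Prop :=
  forall eps, eps > 0 -> exists N, forall n, (n >= N)%nat -> nrm (u n -v l) < eps.
Definition incr (phi : nat -> nat) := forall n, (phi n < phi (S n))%nat.

Lemma incr_ge phi : incr phi -> forall n, (n <= phi n)%nat.
Proof. intros H n; induction n; [lia|]. specialize (H n); lia. Qed.
Lemma incr_mono phi : incr phi -> forall m n, (m <= n)%nat -> (phi m <= phi n)%nat.
Proof. intros H m n Hmn; induction Hmn; [lia|]. specialize (H m0); lia. Qed.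
Lemma incr_comp phi psi : incr phi -> incr psi -> incr (fun n => phi (psi n)).
Proof. intros H1 H2 n. specialize (H2 n).
 assert (phi (S (psi n)) <= phi (psi (S n)))%nat by (apply incr_mono; auto; lia).
 specialize (H1 (psi n)); lia. Qed.

Section Conv.
Context {X : Banach}.
Implicit Types u v : nat -> X.

Lemma conv_sub u l phi : incr phi -> conv u l -> conv (fun n => u (phi n)) l.
Proof. intros Hp Hu eps He. destruct (Hu eps He) as [N HN]. exists N. intros n Hn.
 apply HN. pose proof (incr_ge _ Hp n); lia. Qed.

Lemma conv_unique u l1 l2 : conv u l1 -> conv u l2 -> l1 = l2.
Proof. intros H1 H2. apply sub_eq0, b_norm_sep.
 destruct (Rle_lt_or_eq_dec 0 (nrm (l1 -v l2)) (norm_ge0 _)) as [Hlt|]; [|auto].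
 exfalso. set (e := nrm (l1 -v l2)) in *.
 destruct (H1 (e/2)) as [N1 HN1]; [lra|]. destruct (H2 (e/2)) as [N2 HN2]; [lra|].
 assert (HN1' := HN1 (N1 + N2)%nat). assert (HN2' := HN2 (N1 + N2)%nat).
 specialize (HN1' ltac:(lia)). specialize (HN2' ltac:(lia)).
 pose proof (norm_sub_tri l1 (u (N1+N2)%nat) l2). rewrite (norm_subC l1 (u _)) in H. fold e in H. lra. Qed.

Lemma conv_add u v a b : conv u a -> conv v b -> conv (fun n => u n +v v n) (a +v b).
Proof. intros Hu Hv eps He. destruct (Hu (eps/2)) as [N1 H1]; [lra|].
 destruct (Hv (eps/2)) as [N2 H2]; [lra|]. exists (N1+N2)%nat. intros n Hn.
 replace (u n +v v n -v (a +v b)) with ((u n -v a) +v (v n -v b)).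
 - pose proof (normT (u n -v a) (v n -v b)). assert (H1' := H1 n). assert (H2' := H2 n).
   specialize (H1' ltac:(lia)). specialize (H2' ltac:(lia)). lra.
 - rewrite oppD. rewrite !ACl. f_equal. rewrite !addA. f_equal. apply addC. Qed.

Lemma conv_opp u (a : X) : conv u a -> conv (fun n => -v u n) (-v a).
Proof. intros Hu eps He. destruct (Hu eps He) as [N HN]. exists N. intros n Hn.
 rewrite <- oppD, normN. auto. Qed.

Lemma conv_rs u (a : X) r : conv u a -> conv (fun n => rs r (u n)) (rs r a).
Proof. intros Hu eps He. destruct (Hu (eps / (Rabs r + 1))) as [N HN].
 { apply Rdiv_lt_0_compat; [lra| pose proof (Rabs_pos r); lra]. }
 exists N. intros n Hn. rewrite <- rs_opp, <- rs_add, norm_rs.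
 specialize (HN n Hn). pose proof (Rabs_pos r). pose proof (norm_ge0 (u n -v a)).
 apply Rle_lt_trans with ((Rabs r + 1) * nrm (u n -v a)); [nra|].
 apply Rmult_lt_reg_l with (/ (Rabs r + 1)). apply Rinv_0_lt_compat; lra.
 rewrite <- Rmult_assoc, Rinv_l by lra. lra. Qed.

Lemma conv_const (a : X) : conv (fun _ => a) a.
Proof. intros eps He. exists 0%nat. intros. rewrite addNr', norm0. auto. Qed.

Lemma conv_norm_le u (a : X) (M : R) : conv u a -> (forall n, nrm (u n) <= M) -> nrm a <= M.
Proof. intros Hu HM. destruct (Rle_or_lt (nrm a) M) as [|Hlt]; auto. exfalso.
 destruct (Hu (nrm a - M)) as [N HN]; [lra|]. specialize (HN N (le_n _)).
 pose proof (norm_rev a (u N)). rewrite norm_subC in H. specialize (HM N). lra. Qed.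

Lemma conv_norm_ge u (a : X) (M : R) : conv u a -> (forall n, M <= nrm (u n)) -> M <= nrm a.
Proof. intros Hu HM. destruct (Rle_or_lt M (nrm a)) as [|Hlt]; auto. exfalso.
 destruct (Hu (M - nrm a)) as [N HN]; [lra|]. specialize (HN N (le_n _)).
 pose proof (norm_rev (u N) a). specialize (HM N). lra. Qed.

Lemma conv_bounded u (a : X) : conv u a -> exists B, forall n, nrm (u n) <= B.
Proof. intro Hu. destruct (Hu 1) as [N HN]; [lra|].
 assert (exists B, forall n, (n < N)%nat -> nrm (u n) <= B) as [B HB].
 { clear HN. induction N. exists 0. intros; lia. destruct IHN as [B HB].
   exists (Rmax B (nrm (u N))). intros n Hn. destruct (Nat.eq_dec n N).
   subst. apply Rmax_r. eapply Rle_trans; [apply HB; lia| apply Rmax_l]. }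
 exists (Rmax B (nrm a + 1)). intros n. destruct (Nat.lt_ge_cases n N).
 eapply Rle_trans; [apply HB; lia| apply Rmax_l].
 eapply Rle_trans; [|apply Rmax_r]. specialize (HN n H). pose proof (norm_rev (u n) a). lra. Qed.

Lemma conv_0 u : (forall eps, eps > 0 -> exists N, forall n, (n >= N)%nat -> nrm (u n) < eps) ->
  conv u (bzero X).
Proof. intros H eps He. destruct (H eps He) as [N HN]. exists N. intros. rewrite subr0; auto. Qed.

Lemma conv_sub_eq u v (a : X) : conv u a -> (forall n, u n = v n) -> conv v a.
Proof. intros Hu He eps Hep. destruct (Hu eps Hep) as [N HN]. exists N. intros. rewrite <- He; auto. Qed.
End Conv.

Section Lin.
Context {X Y : Banach}.
Lemma lin_add (f : X -> Y) x y : bounded_linear f -> f (x +v y) = f x +v f y.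
Proof. intros [H _]; apply H. Qed.
Lemma lin_scal (f : X -> Y) c x : bounded_linear f -> f (vscal _ c x) = vscal _ c (f x).
Proof. intros [_ [H _]]; apply H. Qed.
Lemma lin_rs (f : X -> Y) r x : bounded_linear f -> f (rs r x) = rs r (f x).
Proof. apply lin_scal. Qed.
Lemma lin0 (f : X -> Y) : bounded_linear f -> f (bzero X) = bzero Y.
Proof. intro H. rewrite <- (scal_c0 (bzero X)), lin_scal, scal_c0; auto. Qed.
Lemma linN (f : X -> Y) x : bounded_linear f -> f (-v x) = -v f x.
Proof. intro H. rewrite <- !scal_N1, lin_scal; auto. Qed.
Lemma linB (f : X -> Y) x y : bounded_linear f -> f (x -v y) = f x -v f y.
Proof. intro H. rewrite lin_add, linN; auto. Qed.
Lemma lin_bound (f : X -> Y) : bounded_linear f -> exists M, M > 0 /\ forall x, nrm (f x) <= M * nrm x.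
Proof. intros [_ [_ [M HM]]]. exists (Rmax M 1). split. pose proof (Rmax_r M 1); lra.
 intro x. eapply Rle_trans; [apply HM|]. apply Rmult_le_compat_r; [apply norm_ge0| apply Rmax_l]. Qed.
Lemma lin_conv (f : X -> Y) u a : bounded_linear f -> conv u a -> conv (fun n => f (u n)) (f a).
Proof. intros Hf Hu. destruct (lin_bound f Hf) as [M [HM0 HM]]. intros eps He.
 destruct (Hu (eps / M)) as [N HN]. apply Rdiv_lt_0_compat; lra.
 exists N. intros n Hn. rewrite <- linB by auto. eapply Rle_lt_trans; [apply HM|].
 specialize (HN n Hn). replace eps with (M * (eps / M)) by (field; lra).
 apply Rmult_lt_compat_l; auto. Qed.

Lemma compact_bounded (T : X -> Y) (u : nat -> X) (M : R) :
  bounded_linear T -> compact_op T -> (forall n, nrm (u n) <= M) ->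
  exists phi l, incr phi /\ conv (fun n => T (u (phi n))) l.
Proof. intros HT HC HM. set (c := Rmax M 1). assert (Hc : c > 0) by (pose proof (Rmax_r M 1); unfold c; lra).
 destruct (HC (fun n => rs (/ c) (u n))) as [phi [l [Hp Hl]]].
 { intro n. rewrite norm_rs, Rabs_pos_eq by (left; apply Rinv_0_lt_compat; lra).
   apply Rmult_le_reg_l with c; auto. rewrite <- Rmult_assoc, Rinv_r, Rmult_1_l, Rmult_1_r by lra.
   eapply Rle_trans; [apply HM| apply Rmax_l]. }
 exists phi, (rs c l). split; auto.
 apply conv_sub_eq with (fun n => rs c (T (rs (/ c) (u (phi n))))).
 apply conv_rs. exact Hl.
 intro n. rewrite lin_rs by auto. rewrite rs_inv by lra. reflexivity. Qed.
End Lin.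

Definition closedP {X : Banach} (V : X -> Prop) :=
  forall u l, (forall n, V (u n)) -> conv u l -> V l.
Definition subsp {X : Banach} (V : X -> Prop) :=
  V (bzero X) /\ (forall x y, V x -> V y -> V (x +v y)) /\ (forall c x, V x -> V (vscal _ c x)).

Section Sub.
Context {X : Banach} (V : X -> Prop) (HV : subsp V).
Lemma sub0 : V (bzero X). Proof. apply HV. Qed.
Lemma subD x y : V x -> V y -> V (x +v y). Proof. apply HV. Qed.
Lemma subZ c x : V x -> V (vscal _ c x). Proof. apply HV. Qed.
Lemma subN x : V x -> V (-v x). Proof. intro. rewrite <- scal_N1. apply subZ; auto. Qed.
Lemma subB x y : V x -> V y -> V (x -v y). Proof. intros. apply subD; auto. apply subN; auto. Qed.
Lemma subR r x : V x -> V (rs r x). Proof. apply subZ. Qed.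
End Sub.

Section Comp.
Context {X : Banach}.
Lemma compact_add (K1 K2 : X -> X) : bounded_linear K1 -> bounded_linear K2 ->
  compact_op K1 -> compact_op K2 -> compact_op (fun x => K1 x +v K2 x).
Proof. intros L1 L2 C1 C2 u Hu.
 destruct (C1 u Hu) as [phi [l1 [Hp H1]]].
 destruct (C2 (fun n => u (phi n)) (fun n => Hu _)) as [psi [l2 [Hq H2]]].
 exists (fun n => phi (psi n)), (l1 +v l2). split. apply incr_comp; auto.
 change (conv (fun n => K1 (u (phi (psi n))) +v K2 (u (phi (psi n)))) (l1 +v l2)).
 apply conv_add; auto. apply (conv_sub (fun n => K1 (u (phi n)))); auto. Qed.

Lemma compact_comp_r (K M : X -> X) : bounded_linear K -> bounded_linear M ->
  compact_op K -> compact_op (fun x => K (M x)).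
Proof. intros LK LM CK u Hu. destruct (lin_bound M LM) as [B [HB0 HB]].
 destruct (compact_bounded K (fun n => M (u n)) B LK CK) as [phi [l [Hp Hl]]].
 { intro n. eapply Rle_trans; [apply HB|]. specialize (Hu n). nra. }
 exists phi, l. auto. Qed.

Lemma lin_comp (f g : X -> X) : bounded_linear f -> bounded_linear g -> bounded_linear (fun x => f (g x)).
Proof. intros Hf Hg. split; [|split].
 - intros. rewrite !lin_add; auto.
 - intros. rewrite !lin_scal; auto.
 - destruct (lin_bound f Hf) as [M1 [H1 H1']]. destruct (lin_bound g Hg) as [M2 [H2 H2']].
   exists (M1 * M2). intro x. eapply Rle_trans; [apply H1'|]. rewrite Rmult_assoc.
   apply Rmult_le_compat_l; [lra| apply H2']. Qed.

Lemma lin_id : bounded_linear (fun x : X => x).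
Proof. split; [|split]; auto. exists 1; intros; lra. Qed.

Lemma lin_sum (f g : X -> X) : bounded_linear f -> bounded_linear g -> bounded_linear (fun x => f x +v g x).
Proof. intros Hf Hg. split; [|split].
 - intros. rewrite !lin_add by auto. rewrite !ACl. f_equal. rewrite !addA. f_equal. apply addC.
 - intros. rewrite !lin_scal by auto. rewrite scal_add; auto.
 - destruct (lin_bound f Hf) as [M1 [H1 H1']]. destruct (lin_bound g Hg) as [M2 [H2 H2']].
   exists (M1 + M2). intro x. eapply Rle_trans; [apply normT|]. specialize (H1' x); specialize (H2' x). lra. Qed.

Lemma lin_opp (f : X -> X) : bounded_linear f -> bounded_linear (fun x => -v f x).
Proof. intros Hf. split; [|split].
 - intros. rewrite lin_add, oppD by auto. reflexivity.
 - intros. rewrite lin_scal, scal_opp by auto. reflexivity.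
 - destruct (lin_bound f Hf) as [M1 [H1 H1']]. exists M1. intro x. rewrite normN. auto. Qed.
End Comp.

Fixpoint pw {X : Banach} (A : X -> X) (n : nat) (x : X) : X :=
  match n with O => x | S n => A (pw A n x) end.

Section Pow.
Context {X : Banach} (A : X -> X) (HA : bounded_linear A).
Lemma pw_add k j x : pw A (k + j) x = pw A k (pw A j x).
Proof. induction k; simpl; auto. rewrite IHk; auto. Qed.
Lemma pw_S' n x : pw A (S n) x = pw A n (A x).
Proof. replace (S n) with (n + 1)%nat by lia. rewrite pw_add. reflexivity. Qed.
Lemma pw_lin n : bounded_linear (pw A n).
Proof. induction n; simpl. apply lin_id. apply lin_comp; auto. Qed.
End Pow.

Section Key.
Context {X : Banach} (K : X -> X) (LK : bounded_linear K) (CK : compact_op K).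
Definition IK (x : X) := x -v K x.
Lemma IK_lin : bounded_linear IK.
Proof. apply lin_sum. apply lin_id. apply lin_opp; auto. Qed.
Lemma IK_decomp x : x = IK x +v K x.
Proof. unfold IK. rewrite ACl, addNl, addr0; auto. Qed.

Lemma sep_false (u : nat -> X) : (forall n, nrm (u n) <= 1) ->
  (forall j k, (j < k)%nat -> 1/2 <= nrm (K (u k) -v K (u j))) -> False.
Proof. intros Hu Hs. destruct (CK u Hu) as [phi [l [Hp Hl]]].
 destruct (Hl (1/4)) as [N HN]; [lra|].
 assert (H1 := HN N (le_n _)). assert (H2 := HN (S N)). specialize (H2 ltac:(lia)). unfold Defs.dist in *.
 specialize (Hs (phi N) (phi (S N)) (Hp N)).
 pose proof (norm_sub_tri (K (u (phi (S N)))) l (K (u (phi N)))).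
 rewrite (norm_subC l) in H. lra. Qed.

Lemma key_false (V N : X -> Prop) (u : nat -> X) :
  closedP V -> (forall n, V (u n)) -> (forall n, nrm (u n) <= 1) ->
  (forall eps, eps > 0 -> exists M, forall n, (n >= M)%nat -> nrm (IK (u n)) < eps) ->
  (forall n v, N v -> 1/2 <= nrm (u n -v v)) ->
  (forall l, V l -> IK l = bzero X -> N l) -> False.
Proof. intros CV HVu Hu HA HN HVN.
 destruct (compact_bounded K u 1 LK CK Hu) as [phi [l [Hp Hl]]].
 assert (Hc : conv (fun n => u (phi n)) l).
 { apply conv_sub_eq with (fun n => IK (u (phi n)) +v K (u (phi n))).
   rewrite <- (add0r l). apply conv_add; auto. apply conv_0. intros eps He.
   destruct (HA eps He) as [M HM]. exists M. intros n Hn. apply HM. pose proof (incr_ge _ Hp n); lia.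
   intro n. symmetry. apply IK_decomp. }
 assert (HVl : V l) by (apply (CV _ _ (fun n => HVu (phi n)) Hc)).
 assert (HIl : IK l = bzero X).
 { apply (conv_unique (fun n => IK (u (phi n)))). apply lin_conv; auto. apply IK_lin.
   apply conv_0. intros eps He. destruct (HA eps He) as [M HM]. exists M. intros n Hn. apply HM.
   pose proof (incr_ge _ Hp n); lia. }
 specialize (HVN l HVl HIl). destruct (Hc (1/2)) as [M HM]; [lra|].
 specialize (HM M (le_n _)). specialize (HN (phi M) l HVN). lra. Qed.
End Key.

Lemma small_inv eps : eps > 0 -> exists N, forall n, (n >= N)%nat -> / (INR n + 1) < eps.
Proof. intro He. destruct (INR_archimed eps 1 He) as [N HN]. exists N. intros n Hn.
 apply le_INR in Hn. pose proof (pos_INR N).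
 apply Rmult_lt_reg_l with (INR n + 1). lra. rewrite Rinv_r by lra. nra. Qed.

Section NearMin.
Context {X : Banach} (V : X -> Prop) (HV : subsp V) (CV : closedP V).

Lemma nearmin x : exists z, V (x -v z) /\ forall v, V v -> nrm z <= 2 * nrm (z -v v).
Proof. destruct (classic (V x)) as [Hx|Hx].
 { exists (bzero X). rewrite subr0. split; auto. intros. rewrite norm0. pose proof (norm_ge0 (bzero X -v v)). lra. }
 set (E := fun r => exists v, V v /\ r = - nrm (x -v v)).
 assert (HB : bound E). { exists 0. intros r [v [_ ->]]. pose proof (norm_ge0 (x -v v)). lra. }
 assert (HE : exists r, E r). { exists (- nrm (x -v bzero X)). exists (bzero X). split; auto. apply sub0; auto. }
 destruct (completeness E HB HE) as [m [Hub Hlub]].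
 assert (Hd : m < 0).
 { destruct (Rlt_or_le m 0) as [|Hm]; auto. exfalso. apply Hx.
   assert (Hs : forall n : nat, exists v, V v /\ nrm (x -v v) < / (INR n + 1)).
   { intro n. apply NNPP. intro Hn. pose proof (pos_INR n).
     assert (m <= - / (INR n + 1)).
     { apply Hlub. intros r [v [Hv ->]]. apply Ropp_le_contravar.
       apply Rnot_lt_le. intro. apply Hn. eauto. }
     assert (0 < / (INR n + 1)) by (apply Rinv_0_lt_compat; lra). lra. }
   apply choice in Hs. destruct Hs as [f Hf].
   apply (CV f x). intro n; apply Hf. intros eps He. destruct (small_inv eps He) as [N HN].
   exists N. intros n Hn. rewrite norm_subC. specialize (Hf n). specialize (HN n Hn). lra. }
 assert (Hv0 : exists v0, V v0 /\ nrm (x -v v0) < - 2 * m).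
 { apply NNPP. intro Hn. assert (m <= 2 * m).
   { apply Hlub. intros r [v [Hv ->]]. apply Rnot_lt_le. intro. apply Hn. exists v. split; auto. lra. }
   lra. }
 destruct Hv0 as [v0 [Hv0 Hlt]]. exists (x -v v0). split.
 - rewrite oppD, oppK, addKr. auto.
 - intros v Hv. assert (- nrm (x -v (v0 +v v)) <= m).
   { apply Hub. exists (v0 +v v). split; auto. apply subD; auto. }
   replace (x -v v0 -v v) with (x -v (v0 +v v)) by (rewrite oppD, ACl; reflexivity). lra.
Qed.

Lemma riesz (W : X -> Prop) y : subsp W -> (forall x, V x -> W x) -> W y -> ~ V y ->
  exists x, W x /\ nrm x <= 1 /\ forall v, V v -> 1/2 <= nrm (x -v v).
Proof. intros HW HVW Hy Hny. destruct (nearmin y) as [z [Hz Hzm]].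
 assert (Hz0 : nrm z > 0).
 { destruct (Rle_lt_or_eq_dec _ _ (norm_ge0 z)) as [|He]; auto. exfalso. apply Hny.
   symmetry in He. apply b_norm_sep in He. subst z. rewrite subr0 in Hz. auto. }
 exists (rs (/ nrm z) z). split; [|split].
 - apply subR; auto. replace z with (y -v (y -v z)) by (rewrite oppD, oppK, addKr; auto).
   apply subB; auto.
 - rewrite norm_rs, Rabs_pos_eq by (left; apply Rinv_0_lt_compat; lra). rewrite Rinv_l by lra. lra.
 - intros v Hv. specialize (Hzm (rs (nrm z) v) (subR _ HV _ _ Hv)).
   replace (rs (/ nrm z) z -v v) with (rs (/ nrm z) (z -v rs (nrm z) v)).
   + rewrite norm_rs, Rabs_pos_eq by (left; apply Rinv_0_lt_compat; lra).
     apply Rmult_le_reg_l with (nrm z); auto. rewrite <- Rmult_assoc, Rinv_r by lra. lra.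
   + rewrite rs_add, rs_opp, rs_rs, Rinv_l, rs1 by lra. reflexivity.
Qed.
End NearMin.

Lemma normalize_norm {X : Banach} (z : X) : nrm z > 0 -> nrm (rs (/ nrm z) z) = 1.
Proof. intro. rewrite norm_rs, Rabs_pos_eq by (left; apply Rinv_0_lt_compat; lra). apply Rinv_l; lra. Qed.

Lemma normalize_sep {X : Banach} (N : X -> Prop) (HN : subsp N) (z : X) : nrm z > 0 ->
  (forall v, N v -> nrm z <= 2 * nrm (z -v v)) -> forall v, N v -> 1/2 <= nrm (rs (/ nrm z) z -v v).
Proof. intros Hz0 Hzm v Hv. specialize (Hzm (rs (nrm z) v) (subR _ HN _ _ Hv)).
 replace (rs (/ nrm z) z -v v) with (rs (/ nrm z) (z -v rs (nrm z) v)).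
 + rewrite norm_rs, Rabs_pos_eq by (left; apply Rinv_0_lt_compat; lra).
   apply Rmult_le_reg_l with (nrm z); auto. rewrite <- Rmult_assoc, Rinv_r by lra. lra.
 + rewrite rs_add, rs_opp, rs_rs, Rinv_l, rs1 by lra. reflexivity. Qed.

Lemma ker_subsp {X Y : Banach} (f : X -> Y) : bounded_linear f -> subsp (fun x => f x = bzero Y).
Proof. intro Hf. split; [|split].
 - apply lin0; auto.
 - intros x y Hx Hy. rewrite lin_add, Hx, Hy, addr0; auto.
 - intros c x Hx. rewrite lin_scal, Hx, scal_0; auto. Qed.

Lemma ker_closed {X Y : Banach} (f : X -> Y) : bounded_linear f -> closedP (fun x => f x = bzero Y).
Proof. intros Hf u l Hu Hc. apply (conv_unique (fun n => f (u n))). apply lin_conv; auto.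
 apply conv_sub_eq with (fun _ => bzero Y). apply conv_const. intro; symmetry; auto. Qed.

Lemma rng_subsp {X Y : Banach} (f : X -> Y) : bounded_linear f -> subsp (fun y => exists x, y = f x).
Proof. intro Hf. split; [|split].
 - exists (bzero X). symmetry; apply lin0; auto.
 - intros x y [a ->] [b ->]. exists (a +v b). rewrite lin_add; auto.
 - intros c x [a ->]. exists (vscal _ c a). rewrite lin_scal; auto. Qed.

Section RC.
Context {X : Banach} (K : X -> X) (LK : bounded_linear K) (CK : compact_op K).
Let A := IK K.
Let LA : bounded_linear A := IK_lin K LK.

Lemma range_closed : closedP (fun y => exists x, y = A x).
Proof. intros u y Hu Hc. apply choice in Hu. destruct Hu as [xs Hxs].
 assert (Hz : forall n, exists z, (fun x => A x = bzero X) (xs n -v z) /\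
     forall v, A v = bzero X -> nrm z <= 2 * nrm (z -v v)).
 { intro n. apply (nearmin (fun x => A x = bzero X)). apply ker_subsp; auto. apply ker_closed; auto. }
 apply choice in Hz. destruct Hz as [z Hz].
 assert (HAz : forall n, A (z n) = u n).
 { intro n. destruct (Hz n) as [H _]. simpl in H. rewrite linB in H by auto.
   apply sub_eq0 in H. rewrite Hxs, H. reflexivity. }
 destruct (classic (exists M, forall n, nrm (z n) <= M)) as [[M HM]|Hunb].
 - destruct (compact_bounded K z M LK CK HM) as [phi [l [Hp Hl]]].
   assert (Hc2 : conv (fun n => z (phi n)) (y +v l)).
   { apply conv_sub_eq with (fun n => A (z (phi n)) +v K (z (phi n))).
     apply conv_add; auto. apply conv_sub_eq with (fun n => u (phi n)). apply conv_sub; auto.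
     intro; symmetry; auto. intro n; symmetry; apply IK_decomp. }
   exists (y +v l). apply (conv_unique (fun n => u (phi n))). apply conv_sub; auto.
   apply conv_sub_eq with (fun n => A (z (phi n))). apply lin_conv; auto. intro; auto.
 - exfalso. assert (Hs : forall k : nat, exists n, nrm (z n) > INR k + 1).
   { intro k. apply NNPP. intro Hk. apply Hunb. exists (INR k + 1). intro n.
     apply Rnot_lt_le. intro. apply Hk. eauto. }
   apply choice in Hs. destruct Hs as [psi Hpsi].
   destruct (conv_bounded u y Hc) as [B HB].
   assert (Hpos : forall k, nrm (z (psi k)) > 0) by (intro k; specialize (Hpsi k); pose proof (pos_INR k); lra).
   apply (key_false K LK CK (fun _ => True) (fun x => A x = bzero X)
     (fun k => rs (/ nrm (z (psi k))) (z (psi k)))).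
   + intros w l _ _. auto.
   + auto.
   + intro k. rewrite normalize_norm; auto. lra.
   + intros eps He. destruct (small_inv (eps / (Rabs B + 1))) as [N HN].
     { apply Rdiv_lt_0_compat; [lra| pose proof (Rabs_pos B); lra]. }
     exists N. intros k Hk. fold A. rewrite lin_rs by auto. rewrite HAz, norm_rs.
     rewrite Rabs_pos_eq by (left; apply Rinv_0_lt_compat; apply Hpos).
     specialize (HN k Hk). specialize (Hpsi k). specialize (HB (psi k)). pose proof (pos_INR k).
     pose proof (Rle_abs B). pose proof (Rabs_pos B). pose proof (norm_ge0 (u (psi k))).
     assert (Hi : / nrm (z (psi k)) < / (INR k + 1)) by (apply Rinv_lt_contravar; [apply Rmult_lt_0_compat; lra | lra]).
     assert (Hi0 : 0 < / nrm (z (psi k))) by (apply Rinv_0_lt_compat; apply Hpos).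
     assert (HN' : (Rabs B + 1) * / (INR k + 1) < eps).
     { apply Rmult_lt_reg_l with (/ (Rabs B + 1)). apply Rinv_0_lt_compat; lra.
       rewrite <- Rmult_assoc, Rinv_l, Rmult_1_l by lra. unfold Rdiv in HN. lra. }
     nra.
   + intros k v Hv. apply (normalize_sep (fun x => A x = bzero X)); auto. apply ker_subsp; auto. apply Hz.
   + intros; auto.
Qed.

Lemma bounded_below (V : X -> Prop) : subsp V -> closedP V ->
  (forall l, V l -> A l = bzero X -> l = bzero X) ->
  exists c, c > 0 /\ forall v, V v -> nrm v <= c * nrm (A v).
Proof. intros HV CV Hinj. apply NNPP. intro Hn.
 assert (Hs : forall n : nat, exists v, V v /\ nrm v > (INR n + 1) * nrm (A v)).
 { intro n. apply NNPP. intro Hk. apply Hn. exists (INR n + 1). split. pose proof (pos_INR n); lra.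
   intros v Hv. apply Rnot_lt_le. intro. apply Hk. eauto. }
 apply choice in Hs. destruct Hs as [w Hw].
 assert (Hpos : forall n, nrm (w n) > 0).
 { intro n. destruct (Hw n) as [_ H]. pose proof (norm_ge0 (A (w n))). pose proof (pos_INR n). nra. }
 apply (key_false K LK CK V (fun x => x = bzero X) (fun n => rs (/ nrm (w n)) (w n))); auto.
 - intro n. apply subR; auto. apply Hw.
 - intro n. rewrite normalize_norm; auto. lra.
 - intros eps He. destruct (small_inv eps He) as [N HN]. exists N. intros n Hn'.
   fold A. rewrite lin_rs, norm_rs by auto. rewrite Rabs_pos_eq by (left; apply Rinv_0_lt_compat; apply Hpos).
   specialize (HN n Hn'). destruct (Hw n) as [_ H]. specialize (Hpos n). pose proof (pos_INR n).
   apply Rle_lt_trans with (/ (INR n + 1)); auto.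
   apply Rmult_le_reg_l with (nrm (w n)); auto. rewrite <- Rmult_assoc, Rinv_r, Rmult_1_l by lra.
   apply Rmult_le_reg_l with (INR n + 1). lra.
   replace ((INR n + 1) * (nrm (w n) * / (INR n + 1))) with (nrm (w n)) by (field; lra). lra.
 - intros n v ->. rewrite subr0, normalize_norm; auto. lra.
Qed.
End RC.

Lemma alg1 {X : Banach} (a b c d : X) : a -v ((a -v c) +v (b -v (b -v d))) = c -v d.
Proof. rewrite (oppD b), oppK, (addKr b). rewrite oppD, oppD, oppK, addA, addKr. reflexivity. Qed.

Lemma compact_ext {X : Banach} (f g : X -> X) : (forall x, f x = g x) -> compact_op f -> compact_op g.
Proof. intros He Hf. replace g with f; auto. apply functional_extensionality; auto. Qed.

Lemma lin_ext {X : Banach} (f g : X -> X) : (forall x, f x = g x) -> bounded_linear f -> bounded_linear g.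
Proof. intros He Hf. replace g with f; auto. apply functional_extensionality; auto. Qed.

Lemma compact_zero {X : Banach} : compact_op (fun _ : X => bzero X).
Proof. intros u _. exists (fun n => n), (bzero X). split. intro; lia. apply conv_const. Qed.

Section Asc.
Context {X : Banach} (K : X -> X) (LK : bounded_linear K) (CK : compact_op K).
Let A := IK K.
Let LA : bounded_linear A := IK_lin K LK.

Definition Kk k (x : X) := x -v pw A k x.
Lemma Kk_IK k x : IK (Kk k) x = pw A k x.
Proof. unfold IK, Kk. rewrite oppD, oppK, addKr. reflexivity. Qed.
Lemma Kk_lin k : bounded_linear (Kk k).
Proof. unfold Kk. apply lin_sum. apply lin_id. apply lin_opp. apply pw_lin; auto. Qed.
Lemma Kk_compact k : compact_op (Kk k).
Proof. induction k.
 - apply compact_ext with (fun _ => bzero X). intro x. unfold Kk; simpl. symmetry; apply addNr'.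
   apply compact_zero.
 - apply compact_ext with (fun x => Kk k x +v K (pw A k x)).
   + intro x. unfold Kk; simpl. change (A (pw A k x)) with (pw A k x -v K (pw A k x)). rewrite oppD, oppK, ACl. reflexivity.
   + apply compact_add; auto. apply Kk_lin. apply lin_comp; auto. apply pw_lin; auto.
     apply compact_comp_r; auto. apply pw_lin; auto.
Qed.

Definition Nk k (x : X) := pw A k x = bzero X.
Definition Rk k (x : X) := exists z, x = pw A k z.

Lemma Nk_subsp k : subsp (Nk k). Proof. apply ker_subsp. apply pw_lin; auto. Qed.
Lemma Nk_closed k : closedP (Nk k). Proof. apply ker_closed. apply pw_lin; auto. Qed.
Lemma Rk_subsp k : subsp (Rk k). Proof. apply rng_subsp. apply pw_lin; auto. Qed.
Lemma Rk_closed k : closedP (Rk k).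
Proof. intros u l Hu Hc. destruct (range_closed (Kk k) (Kk_lin k) (Kk_compact k) u l) as [z Hz]; auto.
 - intro n. destruct (Hu n) as [z ->]. exists z. rewrite Kk_IK. reflexivity.
 - exists z. rewrite Hz, Kk_IK. reflexivity. Qed.

Lemma Nk_S k x : Nk k x -> Nk (S k) x.
Proof. unfold Nk; simpl. intro H. rewrite H. apply lin0; auto. Qed.
Lemma Nk_mono m n x : (m <= n)%nat -> Nk m x -> Nk n x.
Proof. intros Hmn; induction Hmn; auto. intro; apply Nk_S; auto. Qed.
Lemma Rk_S k x : Rk (S k) x -> Rk k x.
Proof. intros [z ->]. exists (A z). apply pw_S'. Qed.
Lemma Rk_anti m n x : (m <= n)%nat -> Rk n x -> Rk m x.
Proof. intros Hmn; induction Hmn; auto. intro; apply IHHmn, Rk_S; auto. Qed.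
Lemma Nk_A k x : Nk (S k) x -> Nk k (A x).
Proof. unfold Nk. rewrite pw_S'. auto. Qed.
Lemma Rk_A k x : Rk k x -> Rk (S k) (A x).
Proof. intros [z ->]. exists z. reflexivity. Qed.
Lemma K_eq x : K x = x -v A x.
Proof. unfold A, IK. rewrite oppD, oppK, addKr. reflexivity. Qed.

Lemma ascent : exists p, forall x, Nk (S p) x -> Nk p x.
Proof. apply NNPP. intro Hn.
 assert (Hs : forall k, exists x, Nk (S k) x /\ nrm x <= 1 /\ forall v, Nk k v -> 1/2 <= nrm (x -v v)).
 { intro k. assert (exists y, Nk (S k) y /\ ~ Nk k y) as [y [Hy Hny]].
   { apply NNPP. intro H. apply Hn. exists k. intros x Hx. apply NNPP. intro. apply H; eauto. }
   destruct (riesz (Nk k) (Nk_subsp k) (Nk_closed k) (Nk (S k)) y (Nk_subsp (S k)) (Nk_S k) Hy Hny)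
     as [x Hx]. exists x. tauto. }
 apply choice in Hs. destruct Hs as [x Hx].
 apply (sep_false K CK x). intro n; apply Hx.
 intros j k Hjk. destruct (Hx k) as [Hk1 [_ Hk3]].
 rewrite <- (alg1 (x k) (x j)).
 apply Hk3. apply subD. apply Nk_subsp. apply Nk_A; auto.
 apply subB. apply Nk_subsp. apply (Nk_mono (S j)); [lia| apply Hx].
 apply (Nk_mono j); [lia|]. apply Nk_A, Hx. Qed.

Lemma descent : exists q, forall x, Rk q x -> Rk (S q) x.
Proof. apply NNPP. intro Hn.
 assert (Hs : forall k, exists x, Rk k x /\ nrm x <= 1 /\ forall v, Rk (S k) v -> 1/2 <= nrm (x -v v)).
 { intro k. assert (exists y, Rk k y /\ ~ Rk (S k) y) as [y [Hy Hny]].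
   { apply NNPP. intro H. apply Hn. exists k. intros x Hx. apply NNPP. intro. apply H; eauto. }
   destruct (riesz (Rk (S k)) (Rk_subsp (S k)) (Rk_closed (S k)) (Rk k) y (Rk_subsp k) (Rk_S k) Hy Hny)
     as [x Hx]. exists x. tauto. }
 apply choice in Hs. destruct Hs as [x Hx].
 apply (sep_false K CK x). intro n; apply Hx.
 intros j k Hjk. destruct (Hx j) as [Hj1 [_ Hj3]]. rewrite norm_subC.
 rewrite <- (alg1 (x j) (x k)).
 apply Hj3. apply subD. apply Rk_subsp. apply Rk_A; auto.
 apply subB. apply Rk_subsp. apply (Rk_anti (S j) k); [lia| apply Hx].
 apply (Rk_anti (S j) (S k)); [lia|]. apply Rk_A, Hx. Qed.
End Asc.

Definition Copp (a : Defs.C) : Defs.C := (- fst a, - snd a).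
Definition Cminus (a b : Defs.C) : Defs.C := Cplus a (Copp b).

Lemma Cmod_ge0 a : 0 <= Cmod a.
Proof. apply sqrt_pos. Qed.
Lemma Cmod_fst a : Rabs (fst a) <= Cmod a.
Proof. unfold Cmod. rewrite <- sqrt_Rsqr_abs. apply sqrt_le_1_alt. unfold Rsqr. pose proof (pow2_ge_0 (snd a)). simpl in *. nra. Qed.
Lemma Cmod_snd a : Rabs (snd a) <= Cmod a.
Proof. unfold Cmod. rewrite <- sqrt_Rsqr_abs. apply sqrt_le_1_alt. unfold Rsqr. pose proof (pow2_ge_0 (fst a)). simpl in *. nra. Qed.
Lemma Cmod_le a : Cmod a <= Rabs (fst a) + Rabs (snd a).
Proof. unfold Cmod. pose proof (Rabs_pos (fst a)). pose proof (Rabs_pos (snd a)).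
 rewrite <- (sqrt_Rsqr (Rabs (fst a) + Rabs (snd a))) by lra. apply sqrt_le_1_alt.
 unfold Rsqr. replace (fst a ^ 2) with (Rabs (fst a) * Rabs (fst a)).
 replace (snd a ^ 2) with (Rabs (snd a) * Rabs (snd a)). nra.
 rewrite <- Rabs_mult. simpl. rewrite Rmult_1_r. apply Rabs_pos_eq. nra.
 rewrite <- Rabs_mult. simpl. rewrite Rmult_1_r. apply Rabs_pos_eq. nra. Qed.
Lemma Rabs_le0 x : Rabs x <= 0 -> x = 0.
Proof. intro H. pose proof (Rle_abs x). pose proof (Rle_abs (-x)). rewrite Rabs_Ropp in H1. lra. Qed.
Lemma Cmod_0 a : Cmod a = 0 -> a = (0, 0).
Proof. intro H. pose proof (Cmod_fst a). pose proof (Cmod_snd a). rewrite H in *.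
 destruct a as [x y]; simpl in *. f_equal; apply Rabs_le0; lra. Qed.

Definition Cinv (a : Defs.C) : Defs.C :=
  (fst a / (fst a ^ 2 + snd a ^ 2), - snd a / (fst a ^ 2 + snd a ^ 2)).
Lemma Cinv_r a : a <> (0,0) -> Cmult a (Cinv a) = Defs.C1.
Proof. intro H. destruct a as [x y]. unfold Cmult, Cinv, Defs.C1; simpl.
 assert (x * (x * 1) + y * (y * 1) <> 0).
 { intro Hz. apply H. assert (x = 0) by nra. assert (y = 0) by nra. subst; auto. }
 f_equal; field; intro; apply H0; lra. Qed.

Section CS.
Context {X : Banach}.
Lemma scal_Copp (b : Defs.C) (v : X) : vscal _ (Copp b) v = -v vscal _ b v.
Proof. rewrite <- scal_N1, b_scal_assoc. f_equal. unfold Cmult, Copp; simpl. f_equal; ring. Qed.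
Lemma scal_Cminus (a b : Defs.C) (v : X) : vscal _ (Cminus a b) v = vscal _ a v -v vscal _ b v.
Proof. unfold Cminus. rewrite b_scal_distr_r, scal_Copp. reflexivity. Qed.
End CS.

Fixpoint spanP {X : Banach} (vs : list X) (x : X) : Prop :=
  match vs with
  | nil => x = bzero X
  | v :: vs => exists a w, spanP vs w /\ x = vscal _ a v +v w
  end.

Section Span.
Context {X : Banach}.

Lemma span_subsp (vs : list X) : subsp (spanP vs).
Proof. induction vs as [|v vs IH]; split; [| split | | split ]; simpl.
 - auto.
 - intros x y -> ->. apply addr0.
 - intros c x ->. apply scal_0.
 - exists (0,0), (bzero X). split. apply sub0; auto. rewrite scal_c0, addr0; auto.
 - intros x y [a [w [Hw ->]]] [b [w' [Hw' ->]]]. exists (Cplus a b), (w +v w'). split.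
   apply subD; auto. rewrite b_scal_distr_r. rewrite !ACl. f_equal. rewrite addCA. reflexivity.
 - intros c x [a [w [Hw ->]]]. exists (Cmult c a), (vscal _ c w). split. apply subZ; auto.
   rewrite scal_add, b_scal_assoc. reflexivity.
Qed.

Lemma span_lincomb (vs : list X) x : spanP vs x -> exists cs, x = lincomb X cs vs.
Proof. revert x. induction vs as [|v vs IH]; simpl; intros x Hx.
 - exists nil. auto.
 - destruct Hx as [a [w [Hw ->]]]. destruct (IH w Hw) as [cs ->]. exists (a :: cs). reflexivity. Qed.

Lemma closed_ext (P Q : X -> Prop) : (forall x, P x <-> Q x) -> closedP P -> closedP Q.
Proof. intros He HP u l Hu Hc. apply He. apply (HP u l); auto. intro n; apply He; auto. Qed.

Lemma span_closed (vs : list X) : closedP (spanP vs).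
Proof. induction vs as [|v vs IH].
 - simpl. intros u l Hu Hc. apply (conv_unique u). auto.
   apply conv_sub_eq with (fun _ => bzero X). apply conv_const. intro n; symmetry; auto.
 - destruct (classic (spanP vs v)) as [Hv|Hv].
   + apply closed_ext with (spanP vs); auto. intro x; split.
     * intro Hx. exists (0,0), x. split; auto. rewrite scal_c0, add0r; auto.
     * intros [a [w [Hw ->]]]. apply subD. apply span_subsp. apply subZ; auto. apply span_subsp. auto.
   + destruct (nearmin (spanP vs) (span_subsp vs) IH v) as [z [Hz Hzm]].
     assert (Hz0 : nrm z > 0).
     { destruct (Rle_lt_or_eq_dec _ _ (norm_ge0 z)) as [|He]; auto. exfalso. apply Hv.
       symmetry in He. apply b_norm_sep in He. subst z. rewrite subr0 in Hz. auto. }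
     set (d := nrm z / 2).
     assert (Hd : forall w, spanP vs w -> d <= nrm (v -v w)).
     { intros w Hw. unfold d. specialize (Hzm (w -v (v -v z))).
       replace (z -v (w -v (v -v z))) with (v -v w) in Hzm.
       apply Rmult_le_reg_l with 2; [lra|]. replace (2 * (nrm z / 2)) with (nrm z) by field.
       apply Hzm. apply subB; auto. apply span_subsp.
       symmetry. rewrite !oppD, !oppK, (addCA z), (addCA z v), addNr', addr0, addC. reflexivity. }
     assert (Hcoef : forall a w, spanP vs w -> Cmod a * d <= nrm (vscal _ a v +v w)).
     { intros a w Hw. destruct (classic (a = (0,0))) as [->|Ha].
       - unfold Cmod; simpl. replace (0 * (0 * 1) + 0 * (0 * 1)) with 0 by ring. rewrite sqrt_0.
         rewrite Rmult_0_l. apply norm_ge0.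
       - replace (vscal _ a v +v w) with (vscal _ a (v -v (-v vscal _ (Cinv a) w))).
         rewrite b_norm_scal. apply Rmult_le_compat_l. apply Cmod_ge0. apply Hd.
         apply subN. apply span_subsp. apply subZ; auto. apply span_subsp.
         rewrite oppK, scal_add, b_scal_assoc, Cinv_r, b_scal_one; auto. }
     intros u y Hu Hc. apply choice in Hu. destruct Hu as [a Ha]. apply choice in Ha. destruct Ha as [w Hw].
     assert (Hdiff : forall n m, Cmod (Cminus (a n) (a m)) * d <= nrm (u n -v u m)).
     { intros n m. destruct (Hw n) as [Hwn ->]. destruct (Hw m) as [Hwm ->].
       replace (vscal _ (a n) v +v w n -v (vscal _ (a m) v +v w m)) with
         (vscal _ (Cminus (a n) (a m)) v +v (w n -v w m)).
       apply Hcoef. apply subB; auto. apply span_subsp.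
       rewrite scal_Cminus, oppD. rewrite !ACl. f_equal. rewrite addCA. reflexivity. }
     assert (Hd0 : d > 0) by (unfold d; lra).
     assert (Hcau : forall eps, eps > 0 -> exists N, forall n m, (n >= N)%nat -> (m >= N)%nat ->
        Cmod (Cminus (a n) (a m)) < eps).
     { intros eps He. destruct (Hc (eps * d / 2)) as [N HN]. apply Rmult_lt_0_compat; [|lra]. nra.
       exists N. intros n m Hn Hm. specialize (Hdiff n m). pose proof (HN n Hn). pose proof (HN m Hm).
       pose proof (norm_sub_tri (u n) y (u m)). rewrite (norm_subC y) in H1.
       apply Rmult_lt_reg_r with d; auto. lra. }
     destruct (R_complete (fun n => fst (a n))) as [a1 Ha1].
     { intros eps He. destruct (Hcau eps He) as [N HN]. exists N. intros n m Hn Hm.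
       unfold Rdist. specialize (HN n m Hn Hm). pose proof (Cmod_fst (Cminus (a n) (a m))).
       simpl in H. unfold Rminus. lra. }
     destruct (R_complete (fun n => snd (a n))) as [a2 Ha2].
     { intros eps He. destruct (Hcau eps He) as [N HN]. exists N. intros n m Hn Hm.
       unfold Rdist. specialize (HN n m Hn Hm). pose proof (Cmod_snd (Cminus (a n) (a m))).
       simpl in H. unfold Rminus. lra. }
     assert (Hav : conv (fun n => vscal _ (a n) v) (vscal _ (a1, a2) v)).
     { intros eps He. set (e := eps / (4 * (nrm v + 1))).
       assert (He0 : e > 0) by (unfold e; apply Rdiv_lt_0_compat; [lra| pose proof (norm_ge0 v); lra]).
       destruct (Ha1 e He0) as [N1 HN1]. destruct (Ha2 e He0) as [N2 HN2]. exists (N1 + N2)%nat.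
       intros n Hn. rewrite <- scal_Cminus, b_norm_scal.
       assert (H1 := HN1 n). assert (H2 := HN2 n). specialize (H1 ltac:(lia)). specialize (H2 ltac:(lia)).
       unfold Rdist in *. pose proof (Cmod_le (Cminus (a n) (a1, a2))). simpl in H.
       pose proof (norm_ge0 v). pose proof (Cmod_ge0 (Cminus (a n) (a1, a2))).
       apply Rle_lt_trans with ((2 * e) * (nrm v + 1)). unfold Rminus in H1, H2. apply Rmult_le_compat; lra.
       unfold e. replace (2 * (eps / (4 * (nrm v + 1))) * (nrm v + 1)) with (eps / 2) by (field; pose proof (norm_ge0 v); lra). lra. }
     assert (Hwc : conv w (y -v vscal _ (a1, a2) v)).
     { apply conv_sub_eq with (fun n => u n -v vscal _ (a n) v).
       apply conv_add; auto. apply conv_opp; auto.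
       intro n. destruct (Hw n) as [_ ->]. rewrite (addC (vscal _ (a n) v)), ACl, addNr', addr0. reflexivity. }
     exists (a1, a2), (y -v vscal _ (a1, a2) v). split.
     * apply (IH w); auto. intro n; apply Hw.
     * rewrite addCA, addNr', addr0. reflexivity.
Qed.
End Span.

Lemma In_span {X : Banach} (vs : list X) v : In v vs -> spanP vs v.
Proof. induction vs as [|a vs IH]; simpl; [tauto|]. intros [->|Hin].
 - exists Defs.C1, (bzero X). split. apply sub0, span_subsp. rewrite b_scal_one, addr0; auto.
 - exists (0,0), v. split; auto. rewrite scal_c0, add0r; auto. Qed.

Lemma span_in_sub {X : Banach} (N : X -> Prop) (HN : subsp N) (vs : list X) :
  (forall v, In v vs -> N v) -> forall x, spanP vs x -> N x.
Proof. induction vs as [|a vs IH]; simpl; intros Hall x Hx.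
 - subst. apply sub0; auto.
 - destruct Hx as [c [w [Hw ->]]]. apply subD; auto. apply subZ; auto. Qed.

Lemma findim {X : Banach} (K : X -> X) (LK : bounded_linear K) (CK : compact_op K) :
  exists vs : list X, forall x, IK K x = bzero X -> spanP vs x.
Proof. set (N := fun x => IK K x = bzero X).
 assert (HN : subsp N) by (apply ker_subsp, IK_lin; auto).
 assert (CN : closedP N) by (apply ker_closed, IK_lin; auto).
 apply NNPP. intro Hn.
 assert (Hs : forall vs : list X, exists x, (forall v, In v vs -> N v) ->
     N x /\ nrm x <= 1 /\ forall w, spanP vs w -> 1/2 <= nrm (x -v w)).
 { intro vs. destruct (classic (forall v, In v vs -> N v)) as [Hall|Hnot].
   - assert (exists y, N y /\ ~ spanP vs y) as [y [Hy Hny]].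
     { apply NNPP. intro H. apply Hn. exists vs. intros x Hx. apply NNPP. intro. apply H; eauto. }
     destruct (riesz (spanP vs) (span_subsp vs) (span_closed vs) N y HN
       (span_in_sub N HN vs Hall) Hy Hny) as [x Hx]. exists x. intros _. exact Hx.
   - exists (bzero X). intro; contradiction. }
 apply choice in Hs. destruct Hs as [f Hf].
 set (xs := fix xs (k : nat) : list X := match k with O => nil | S k => f (xs k) :: xs k end).
 assert (Hinv : forall k v, In v (xs k) -> N v).
 { induction k; simpl; [tauto|]. intros v [<-|Hin]; auto. apply Hf. apply IHk. }
 assert (Hin : forall j k, (j < k)%nat -> In (f (xs j)) (xs k)).
 { intros j k Hjk. induction Hjk; simpl; auto. }
 assert (HKu : forall k, K (f (xs k)) = f (xs k)).
 { intro k. destruct (Hf (xs k) (Hinv k)) as [H _]. unfold N, IK in H. symmetry. apply sub_eq0. exact H. }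
 apply (sep_false K CK (fun k => f (xs k))).
 - intro n. apply Hf, Hinv.
 - intros j k Hjk. rewrite !HKu. apply Hf. apply Hinv. apply In_span. apply Hin; auto.
Qed.

Section Reg.
Context {X : Banach} (K : X -> X) (LK : bounded_linear K) (CK : compact_op K).
Local Notation A := (IK K).
Let LA : bounded_linear A := IK_lin K LK.
Context (p : nat)
  (HNS : forall x, Nk K (S p) x -> Nk K p x)
  (HN2 : forall x, Nk K (p + p) x -> Nk K p x)
  (HRS : forall x, Rk K p x -> Rk K (S p) x)
  (HR2 : forall x, Rk K p x -> Rk K (p + p) x).

Lemma NR0 r : Rk K p r -> Nk K p r -> r = bzero X.
Proof. intros [z ->] Hn. unfold Nk in Hn. rewrite <- pw_add in Hn. apply HN2 in Hn. exact Hn. Qed.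

Lemma decomp x : exists r, Rk K p r /\ Nk K p (x -v r).
Proof. assert (Rk K p (pw A p x)) by (exists x; auto). apply HR2 in H. destruct H as [z Hz].
 rewrite pw_add in Hz. exists (pw A p z). split. exists z; auto.
 unfold Nk. rewrite linB by (apply pw_lin; auto). rewrite Hz. apply addNr'. Qed.

Lemma decomp_uniq x r1 r2 : Rk K p r1 -> Nk K p (x -v r1) -> Rk K p r2 -> Nk K p (x -v r2) -> r1 = r2.
Proof. intros H1 H2 H3 H4. apply sub_eq0. apply NR0.
 apply subB; auto. apply Rk_subsp; auto.
 replace (r1 -v r2) with ((x -v r2) -v (x -v r1)). apply subB; auto. apply Nk_subsp; auto.
 rewrite !oppD, !oppK. rewrite (addC x), ACl, addKr. apply addC. Qed.

Definition Pr x : X := proj1_sig (constructive_indefinite_description _ (decomp x)).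
Lemma Pr_spec x : Rk K p (Pr x) /\ Nk K p (x -v Pr x).
Proof. unfold Pr. destruct (constructive_indefinite_description _ _). simpl. auto. Qed.

Lemma Pr_lin : bounded_linear Pr.
Proof. split; [|split].
 - intros x y. destruct (Pr_spec x) as [Hx1 Hx2]. destruct (Pr_spec y) as [Hy1 Hy2].
   destruct (Pr_spec (x +v y)) as [H1 H2].
   apply (decomp_uniq (x +v y)); auto. apply subD; auto. apply Rk_subsp; auto.
   replace (x +v y -v (Pr x +v Pr y)) with ((x -v Pr x) +v (y -v Pr y)). apply subD; auto. apply Nk_subsp; auto.
   rewrite oppD, !ACl. f_equal. rewrite addCA. reflexivity.
 - intros c x. destruct (Pr_spec x) as [Hx1 Hx2]. destruct (Pr_spec (vscal _ c x)) as [H1 H2].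
   apply (decomp_uniq (vscal _ c x)); auto. apply subZ; auto. apply Rk_subsp; auto.
   rewrite <- scal_sub. apply subZ; auto. apply Nk_subsp; auto.
 - destruct (bounded_below (Kk K p) (Kk_lin K LK p) (Kk_compact K LK CK p) (Rk K p) (Rk_subsp K LK p) (Rk_closed K LK CK p))
     as [c [Hc Hcb]].
   { intros l Hl Hz. rewrite Kk_IK in Hz. apply NR0; auto. }
   destruct (lin_bound (pw A p) (pw_lin A LA p)) as [M [HM HMb]].
   exists (c * M). intro x. destruct (Pr_spec x) as [Hx1 Hx2].
   eapply Rle_trans; [apply Hcb; auto|]. rewrite Kk_IK.
   replace (pw A p (Pr x)) with (pw A p x).
   rewrite Rmult_assoc. apply Rmult_le_compat_l; [lra| apply HMb].
   unfold Nk in Hx2. rewrite linB in Hx2 by (apply pw_lin; auto). apply sub_eq0 in Hx2. auto.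
Qed.

Lemma sol x : exists s, Rk K p s /\ A s = Pr x.
Proof. destruct (Pr_spec x) as [H1 _]. apply HRS in H1. destruct H1 as [w Hw].
 exists (pw A p w). split. exists w; auto. rewrite Hw. reflexivity. Qed.

Lemma N1p x : Nk K 1 x -> Nk K p x.
Proof. intro H. destruct p as [|q] eqn:Ep. apply HNS; auto. apply (Nk_mono K LK 1); auto; lia. Qed.

Lemma sol_uniq s1 s2 : Rk K p s1 -> Rk K p s2 -> A s1 = A s2 -> s1 = s2.
Proof. intros H1 H2 He. apply sub_eq0, NR0. apply subB; auto. apply Rk_subsp; auto.
 apply N1p. unfold Nk; simpl. rewrite linB, He by auto. apply addNr'. Qed.

Definition Bop x : X := proj1_sig (constructive_indefinite_description _ (sol x)).
Lemma Bop_spec x : Rk K p (Bop x) /\ A (Bop x) = Pr x.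
Proof. unfold Bop. destruct (constructive_indefinite_description _ _). simpl. auto. Qed.

Lemma Bop_lin : bounded_linear Bop.
Proof. split; [|split].
 - intros x y. destruct (Bop_spec x) as [Hx1 Hx2]. destruct (Bop_spec y) as [Hy1 Hy2].
   destruct (Bop_spec (x +v y)) as [H1 H2].
   apply sol_uniq; auto. apply subD; auto. apply Rk_subsp; auto.
   rewrite H2, (lin_add A _ _ LA), Hx2, Hy2. apply lin_add, Pr_lin.
 - intros c x. destruct (Bop_spec x) as [Hx1 Hx2]. destruct (Bop_spec (vscal _ c x)) as [H1 H2].
   apply sol_uniq; auto. apply subZ; auto. apply Rk_subsp; auto.
   rewrite H2, (lin_scal A _ _ LA), Hx2. apply lin_scal, Pr_lin.
 - destruct (bounded_below K LK CK (Rk K p) (Rk_subsp K LK p) (Rk_closed K LK CK p)) as [c [Hc Hcb]].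
   { intros l Hl Hz. apply NR0; auto. apply N1p. exact Hz. }
   destruct (lin_bound Pr Pr_lin) as [M [HM HMb]].
   exists (c * M). intro x. destruct (Bop_spec x) as [Hx1 Hx2].
   eapply Rle_trans; [apply Hcb; auto|]. fold A. rewrite Hx2.
   rewrite Rmult_assoc. apply Rmult_le_compat_l; [lra| apply HMb].
Qed.

Lemma Bop_A x : Bop (A x) = Pr x.
Proof. destruct (Pr_spec x) as [H1 H2].
 assert (HPA : Pr (A x) = A (Pr x)).
 { destruct (Pr_spec (A x)) as [H3 H4]. symmetry. apply (decomp_uniq (A x)); auto.
   apply (Rk_anti K p (S p)). lia. apply Rk_A; auto.
   rewrite <- linB by auto. apply Nk_A; auto. apply Nk_S; auto. }
 destruct (Bop_spec (A x)) as [H3 H4]. apply sol_uniq; auto. rewrite H4; auto. Qed.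
End Reg.

Lemma regularizer {X : Banach} (K : X -> X) (LK : bounded_linear K) (CK : compact_op K) :
  exists (B Phi : X -> X), bounded_linear B /\ bounded_linear Phi /\ finite_rank Phi /\
    forall x, B (IK K x) = x -v Phi x.
Proof.
 destruct (ascent K LK CK) as [p1 Hp1]. destruct (descent K LK CK) as [q Hq].
 assert (Hasc : forall j x, Nk K (p1 + j) x -> Nk K p1 x).
 { induction j; intros x Hx. rewrite Nat.add_0_r in Hx; auto.
   apply IHj. unfold Nk in *. replace (p1 + S j)%nat with (S p1 + j)%nat in Hx by lia.
   rewrite pw_add in Hx. apply Hp1 in Hx. unfold Nk in Hx. rewrite <- pw_add in Hx. auto. }
 assert (Hdesc : forall j x, Rk K q x -> Rk K (q + j) x).
 { induction j; intros x Hx. rewrite Nat.add_0_r; auto.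
   destruct (IHj x Hx) as [z ->]. rewrite (Nat.add_comm q j), pw_add.
   assert (Rk K q (pw (IK K) q z)) by (exists z; auto). apply Hq in H. destruct H as [w Hw].
   rewrite Hw, <- pw_add. exists w. f_equal. lia. }
 set (p := (p1 + q)%nat).
 assert (HNp : forall m x, Nk K m x -> Nk K p1 x).
 { intros m x Hx. destruct (Nat.le_ge_cases m p1).
   apply (Nk_mono K LK m); auto. apply (Hasc (m - p1)%nat). replace (p1 + (m - p1))%nat with m by lia. auto. }
 assert (HRp : forall m x, Rk K q x -> Rk K m x).
 { intros m x Hx. destruct (Nat.le_ge_cases m q).
   apply (Rk_anti K m q); auto. replace m with (q + (m - q))%nat by lia. auto. }
 assert (HNS : forall x, Nk K (S p) x -> Nk K p x).
 { intros x Hx. apply (Nk_mono K LK p1). unfold p; lia. eapply HNp; eauto. }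
 assert (HN2 : forall x, Nk K (p + p) x -> Nk K p x).
 { intros x Hx. apply (Nk_mono K LK p1). unfold p; lia. eapply HNp; eauto. }
 assert (HRS : forall x, Rk K p x -> Rk K (S p) x).
 { intros x Hx. apply HRp. apply (Rk_anti K q p). unfold p; lia. auto. }
 assert (HR2 : forall x, Rk K p x -> Rk K (p + p) x).
 { intros x Hx. apply HRp. apply (Rk_anti K q p). unfold p; lia. auto. }
 destruct (findim (Kk K p) (Kk_lin K LK p) (Kk_compact K LK CK p)) as [vs Hvs].
 exists (Bop K LK p HRS HR2), (fun x => x -v Pr K LK p HR2 x). split; [|split; [|split]].
 - eapply Bop_lin; eauto.
 - apply lin_sum. apply lin_id. apply lin_opp. eapply Pr_lin; eauto.
 - exists vs. intro x. apply span_lincomb. apply Hvs. rewrite Kk_IK. apply Pr_spec.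
 - intro x. rewrite (Bop_A K LK p HNS HN2 HRS HR2). rewrite oppD, oppK, addKr. reflexivity.
Qed.

Definition nn (A : VNS) := forall x : A, 0 <= vnorm A x.

Lemma nn_ban (X : Banach) : nn X.
Proof. intro; apply b_norm_nonneg. Qed.
Lemma nn_l2 (A B : VNS) : nn (l2sum A B).
Proof. intro; apply sqrt_pos. Qed.

Lemma lin_compV {A B C : VNS} (f : B -> C) (g : A -> B) : nn B ->
  bounded_linear f -> bounded_linear g -> bounded_linear (fun x => f (g x)).
Proof. intros HB [f1 [f2 [M1 HM1]]] [g1 [g2 [M2 HM2]]]. split; [|split].
 - intros; rewrite g1, f1; auto.
 - intros; rewrite g2, f2; auto.
 - exists (Rmax M1 0 * M2). intro x. eapply Rle_trans; [apply HM1|].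
   apply Rle_trans with (Rmax M1 0 * vnorm _ (g x)).
   apply Rmult_le_compat_r; [apply HB| apply Rmax_l].
   rewrite Rmult_assoc. apply Rmult_le_compat_l; [apply Rmax_r| apply HM2]. Qed.

Lemma l2_fst_le {A B : Banach} (a : A) (b : B) : vnorm _ a <= vnorm (l2sum A B) (a, b).
Proof. change (vnorm (l2sum A B) (a,b)) with (sqrt (vnorm _ a ^ 2 + vnorm _ b ^ 2)). rewrite <- (sqrt_pow2 (vnorm _ a)) at 1 by apply norm_ge0. apply sqrt_le_1_alt.
 pose proof (pow2_ge_0 (vnorm _ b)). lra. Qed.
Lemma l2_snd_le {A B : Banach} (a : A) (b : B) : vnorm _ b <= vnorm (l2sum A B) (a, b).
Proof. change (vnorm (l2sum A B) (a,b)) with (sqrt (vnorm _ a ^ 2 + vnorm _ b ^ 2)). rewrite <- (sqrt_pow2 (vnorm _ b)) at 1 by apply norm_ge0. apply sqrt_le_1_alt.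
 pose proof (pow2_ge_0 (vnorm _ a)). lra. Qed.

Section Inj.
Context {A B : Banach}.
Lemma p1_lin : bounded_linear (fun z : l2sum A B => fst z).
Proof. split; [|split]; auto. exists 1. intros [a b]. rewrite Rmult_1_l. apply l2_fst_le. Qed.
Lemma p2_lin : bounded_linear (fun z : l2sum A B => snd z).
Proof. split; [|split]; auto. exists 1. intros [a b]. rewrite Rmult_1_l. apply l2_snd_le. Qed.
Lemma i1_lin : bounded_linear (fun a : A => ((a, bzero B) : l2sum A B)).
Proof. split; [|split].
 - intros. simpl. rewrite addr0. reflexivity.
 - intros. simpl. rewrite scal_0. reflexivity.
 - exists 1. intro a. change (vnorm (l2sum A B) (a, bzero B)) with (sqrt (vnorm _ a ^ 2 + vnorm _ (bzero B) ^ 2)). rewrite norm0. replace (vnorm _ a ^ 2 + 0 ^ 2) with (vnorm _ a ^ 2) by ring.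
   rewrite sqrt_pow2 by apply norm_ge0. lra. Qed.
Lemma i2_lin : bounded_linear (fun b : B => ((bzero A, b) : l2sum A B)).
Proof. split; [|split].
 - intros. simpl. rewrite addr0. reflexivity.
 - intros. simpl. rewrite scal_0. reflexivity.
 - exists 1. intro b. change (vnorm (l2sum A B) (bzero A, b)) with (sqrt (vnorm _ (bzero A) ^ 2 + vnorm _ b ^ 2)). rewrite norm0. replace (0 ^ 2 + vnorm _ b ^ 2) with (vnorm _ b ^ 2) by ring.
   rewrite sqrt_pow2 by apply norm_ge0. lra. Qed.
End Inj.

Theorem proposition2p2 (X Y : Banach) (T : X -> X) (S : Y -> Y)
  (hT : bounded_linear T) (hS : bounded_linear S)
  (cT : compact_op T) (cS : compact_op S)
  (hEAE : EAE T S) :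
  exists (G : Y -> X) (H : X -> Y) (R0 : X -> X),
    bounded_linear G /\ bounded_linear H /\ bounded_linear R0 /\
    finite_rank R0 /\
    forall x : X, T x = vadd _ (G (S (H x))) (R0 x).
Proof.
 destruct hEAE as [X' [Y' [E [F [[LE [P [LP [PE EP]]]] [[LF [Q [LQ [QF FQ]]]] hEq]]]]]].
 set (G0 := fun y : Y => fst (E ((y, bzero Y') : l2sum Y Y'))).
 set (H0 := fun x : X => fst (F ((x, bzero X') : l2sum X X'))).
 set (M := fun z : X => fst (Q ((bzero Y, snd (P ((z, bzero X') : l2sum X X'))) : l2sum Y Y'))).
 assert (LG0 : bounded_linear G0).
 { apply (lin_compV (fun z : l2sum X X' => fst z)). apply nn_l2. apply p1_lin.
   apply lin_compV. apply nn_l2. auto. apply i1_lin. }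
 assert (LH0 : bounded_linear H0).
 { apply (lin_compV (fun z : l2sum Y Y' => fst z)). apply nn_l2. apply p1_lin.
   apply lin_compV. apply nn_l2. auto. apply i1_lin. }
 assert (LM : bounded_linear M).
 { apply (lin_compV (fun z : l2sum X X' => fst z)). apply nn_l2. apply p1_lin.
   apply (lin_compV Q). apply nn_l2. auto.
   apply (lin_compV (fun b : Y' => ((bzero Y, b) : l2sum Y Y'))). apply nn_ban. apply i2_lin.
   apply (lin_compV (fun z : l2sum Y Y' => snd z)). apply nn_l2. apply p2_lin.
   apply (lin_compV P). apply nn_l2. auto. apply i1_lin. }
 assert (Hkey : forall x, T x = G0 (S (H0 x)) +v T (M (T x))).
 { intro x. set (a := fst (F ((x, bzero X') : l2sum X X'))). set (b := snd (F ((x, bzero X') : l2sum X X'))).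
   assert (E1 := hEq x (bzero X')). fold a b in E1.
   assert (Hb : snd (P ((T x, bzero X') : l2sum X X')) = b).
   { rewrite E1, PE. reflexivity. }
   assert (Hsplit : E ((S a, b) : l2sum Y Y') = vadd (l2sum X X') (E ((S a, bzero Y') : l2sum Y Y')) (E ((bzero Y, b) : l2sum Y Y'))).
   { destruct LE as [LE1 _]. rewrite <- LE1. simpl. rewrite addr0, add0r. reflexivity. }
   assert (HQ : T (fst (Q ((bzero Y, b) : l2sum Y Y'))) = fst (E ((bzero Y, b) : l2sum Y Y'))).
   { destruct (Q ((bzero Y, b) : l2sum Y Y')) as [c c'] eqn:Hc.
     assert (E2 := hEq c c'). rewrite <- Hc, FQ in E2. simpl in E2. rewrite lin0 in E2 by auto.
     rewrite <- E2. reflexivity. }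
   unfold G0, H0, M. rewrite Hb. fold a. rewrite HQ.
   change (T x) with (fst ((T x, bzero X') : l2sum X X')). rewrite E1, Hsplit. reflexivity. }
 destruct (regularizer (fun z => T (M z)) (lin_comp T M hT LM) (compact_comp_r T M hT LM cT))
   as [Bo [Phi [LB [LPhi [FPhi HBP]]]]].
 exists (fun y => Bo (G0 y)), H0, (fun x => Phi (T x)). split; [|split; [|split; [|split]]].
 - apply lin_compV. apply nn_ban. auto. auto.
 - auto.
 - apply lin_comp; auto.
 - destruct FPhi as [vs Hvs]. exists vs. intro x. apply Hvs.
 - intro x. specialize (HBP (T x)). unfold IK in HBP.
   assert (Tx : T x -v T (M (T x)) = G0 (S (H0 x))).
   { rewrite (Hkey x) at 1. rewrite ACl, addNr', addr0. reflexivity. }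
   rewrite Tx in HBP. rewrite HBP. rewrite ACl, addNl, addr0. reflexivity.
Qed.
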